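(* On $\mathcal{P}(\mathbb{R}^{2m},\mathbb{C})\cap\ker(\Delta_x,\Delta_u)$, $$[S_x,S_u]=\frac{H_x-H_u}{(1+H_x)(1+H_u)}\,CA-(H_x-H_u).$$
   Context: Fix an integer $m>4$. For $x,u\in\mathbb{R}^m$ let $\mathcal{P}(\mathbb{R}^{2m},\mathbb{C})$ be complex polynomials in $(x,u)$, $\mathcal{P}_{p,q}$ those of bidegree $(p,q)$. Write $|x|^2=\sum x_j^2$, $\langle u,x\rangle=\sum u_jx_j$, $\Delta_x=\sum\partial_{x_j}^2$, $\Delta_u=\sum\partial_{u_j}^2$, $\langle\partial_u,\partial_x\rangle=\sum\partial_{u_j}\partial_{x_j}$, $\langle x,\partial_u\rangle=\sum x_j\partial_{u_j}$, $\langle u,\partial_x\rangle=\sum u_j\partial_{x_j}$, $\mathbb{E}_x=\sum x_j\partial_{x_j}$, $\mathbb{E}_u=\sum u_j\partial_{u_j}$, $H_x=-(\mathbb{E}_x+\frac m2)$, $H_u=-(\mathbb{E}_u+\frac m2)$, $\ker(D_1,\dots,D_r)=\bigcap\ker D_i$. Every $P\in\mathcal{P}_{p,q}$ is uniquely $\sum_{a,b\ge0}|x|^{2a}|u|^{2b}H'_{p-2a,q-2b}$ with $H'_{p-2a,q-2b}\in\mathcal{P}_{p-2a,q-2b}\cap\ker(\Delta_x,\Delta_u)$; $\pi_{\mathfrak{s}}P:=H'_{p,q}$. On $\ker(\Delta_x,\Delta_u)$: $S_x=\pi_{\mathfrak{s}}\langle x,\partial_u\rangle$, $S_u=\pi_{\mathfrak{s}}\langle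 u,\partial_x\rangle$, $A=\pi_{\mathfrak{s}}\langle\partial_u,\partial_x\rangle$, $C=\pi_{\mathfrak{s}}\langle u,x\rangle$. Convention: a rational function of $H_x,H_u$ written to the left of an operator product is evaluated at the eigenvalues of $H_x,H_u$ on the bihomogeneous output of that product; the term $-(H_x-H_u)$ acts as multiplication by the corresponding eigenvalue. *)

(* Defs.v *)
From HB Require Import structures.
From mathcomp Require Import all_boot all_order all_algebra.
From mathcomp Require Import complex.
From mathcomp Require Import mpoly.
From Stdlib Require Import ClassicalEpsilon.

Set Implicit Arguments. Unset Strict Implicit. Unset Printing Implicit Defensive.
Import Order.TTheory GRing.Theory Num.Theory.
Local Open Scope ring_scope.

Section Defs.
Variables (R : rcfType) (m : nat).
Local Notation P := {mpoly R[i][m + m]}.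

Definition xv (j : 'I_m) : P := 'X_(lshift m j).
Definition uv (j : 'I_m) : P := 'X_(rshift m j).
Definition dx (j : 'I_m) (f : P) : P := mderiv (lshift m j) f.
Definition du (j : 'I_m) (f : P) : P := mderiv (rshift m j) f.

Definition normx2 : P := \sum_(j < m) xv j ^+ 2.
Definition normu2 : P := \sum_(j < m) uv j ^+ 2.
Definition ux : P := \sum_(j < m) uv j * xv j.

Definition lapx (f : P) : P := \sum_(j < m) dx j (dx j f).
Definition lapu (f : P) : P := \sum_(j < m) du j (du j f).
Definition dudx (f : P) : P := \sum_(j < m) du j (dx j f).
Definition xdu (f : P) : P := \sum_(j < m) xv j * du j f.
Definition udx (f : P) : P := \sum_(j < m) uv j * dx j f.

Definition xdeg (mo : 'X_{1..(m + m)}) : nat := \sum_(j < m) mo (lshift m j).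
Definition udeg (mo : 'X_{1..(m + m)}) : nat := \sum_(j < m) mo (rshift m j).

Definition bihomog (p q : nat) (f : P) : Prop :=
  forall mo : 'X_{1..(m + m)}, f@_mo != 0 -> xdeg mo = p /\ udeg mo = q.

Definition harmonic (f : P) : Prop := lapx f = 0 /\ lapu f = 0.

Definition sdecomp (p q : nat) (f : P) (Hf : nat -> nat -> P) : Prop :=
  bihomog p q f /\
  (forall a b, (2 * a <= p)%N -> (2 * b <= q)%N ->
     bihomog (p - 2 * a) (q - 2 * b) (Hf a b) /\ harmonic (Hf a b)) /\
  f = \sum_(a < (p./2).+1) \sum_(b < (q./2).+1)
        normx2 ^+ a * normu2 ^+ b * Hf a b.

(* pi_s f := H'_{p,q}, the (unique) harmonic component of degree (p,q)
   in the decomposition of a bihomogeneous f *)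
Definition pis (f : P) : P :=
  epsilon (inhabits 0)
    (fun H => exists p q Hf, sdecomp p q f Hf /\ H = Hf 0%N 0%N).

Definition Sx (f : P) : P := pis (xdu f).
Definition Su (f : P) : P := pis (udx f).
Definition Aop (f : P) : P := pis (dudx f).
Definition Cop (f : P) : P := pis (ux * f).

(* eigenvalue of H_x (resp. H_u) on P_{p,.} (resp. P_{.,q}) : -(p + m/2) *)
Definition Hval (p : nat) : R[i] := - (p%:R + m%:R / 2).

End Defs.

(* Main.v *)
Require Import Defs.
From HB Require Import structures.
From mathcomp Require Import all_boot all_order all_algebra.
From mathcomp Require Import complex.
From mathcomp Require Import mpoly.
From Stdlib Require Import ClassicalEpsilon.
From mathcomp Require Import ring zify.
Set Implicit Arguments. Unset Strict Implicit. Unset Printing Implicit Defensive.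
Import Order.TTheory GRing.Theory Num.Theory.
Local Open Scope ring_scope.

Module W1.


Section Work.
Variables (R : rcfType) (m : nat).
Local Notation C := R[i].
Local Notation n := (m + m)%N.
Local Notation P := {mpoly C[n]}.

Lemma mcoeffXiM (i : 'I_n) (p : P) mo :
  ('X_i * p)@_mo = p@_(mo - U_(i))%MM *+ (0 < mo i)%N.
Proof.
rewrite mulrC; case: (posnP (mo i)) => hmo.
  rewrite mulr0n; have : mo \notin msupp (p * 'X_i).
    rewrite (perm_mem (msuppMX p U_(i))); apply/mapP => -[m' _ e].
    by move: hmo; rewrite e mnmDE mnm1E eqxx.
  by rewrite mcoeff_msupp negbK => /eqP.
have -> : mo = (U_(i) + (mo - U_(i)))%MM.
  rewrite addmC submK //; apply/mnm_lepP => j; rewrite mnm1E.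
  by case: eqP => [<-|]; rewrite ?hmo.
by rewrite mcoeffMX addmC addmK mulr1n.
Qed.

Lemma mderivXi (i j : 'I_n) : mderiv j ('X_i : P) = (i == j)%:R.
Proof.
rewrite mderivX mnm1E; case: eqP => [->|_]; last by rewrite scale0r.
have -> : (U_(j) - U_(j))%MM = 0%MM by apply/mnmP => k; rewrite mnmBE subnn mnm0E.
  by rewrite mpolyX0 scale1r.
Qed.

Definition Xv (f : 'I_m -> 'I_n) j : P := 'X_(f j).
Fact Dv_key : unit. Proof. exact: tt. Qed.
Definition Dv (f : 'I_m -> 'I_n) j : P -> P := locked_with Dv_key (mderiv (f j)).
Lemma DvE f j (p : P) : Dv f j p = mderiv (f j) p.
Proof. by rewrite /Dv unlock. Qed.
Definition nrm f : P := \sum_(j < m) Xv f j ^+ 2.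
Definition lap f (p : P) : P := \sum_(j < m) Dv f j (Dv f j p).
Definition dg (f : 'I_m -> 'I_n) (mo : 'X_{1..n}) : nat := (\sum_(j < m) mo (f j))%N.
Definition hom f k (p : P) := forall mo, p@_mo != 0 -> dg f mo = k.

Lemma dgD f a b : dg f (a + b)%MM = (dg f a + dg f b)%N.
Proof. by rewrite /dg -big_split; apply: eq_bigr => j _; rewrite mnmDE. Qed.

Lemma dgU f (inj : injective f) j : dg f U_(f j) = 1%N.
Proof.
rewrite /dg (bigD1 j) //= mnm1E eqxx big1 // => k hk.
by rewrite mnm1E (inj_eq inj) eq_sym (negbTE hk).
Qed.

Lemma dgU0 f i : (forall j, f j != i) -> dg f U_(i) = 0%N.
Proof. by move=> h; rewrite /dg big1 // => k _; rewrite mnm1E eq_sym (negbTE (h k)). Qed.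

Lemma hom0 f k : hom f k 0.
Proof. by move=> mo; rewrite mcoeff0 eqxx. Qed.

Lemma homD f k p q : hom f k p -> hom f k q -> hom f k (p + q).
Proof.
move=> hp hq mo; rewrite mcoeffD; have [/hp //|/negPn/eqP p0] := boolP (p@_mo != 0).
by rewrite p0 add0r => /hq.
Qed.

Lemma homN f k p : hom f k p -> hom f k (- p).
Proof. by move=> hp mo; rewrite mcoeffN oppr_eq0 => /hp. Qed.

Lemma homB f k p q : hom f k p -> hom f k q -> hom f k (p - q).
Proof. by move=> hp hq; apply: homD => //; apply: homN. Qed.

Lemma homZ f k c p : hom f k p -> hom f k (c *: p).
Proof.
move=> hp mo; rewrite mcoeffZ; have [/hp //|/negPn/eqP p0] := boolP (p@_mo != 0).
by rewrite p0 mulr0 eqxx.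
Qed.

Lemma homMn f k p l : hom f k p -> hom f k (p *+ l).
Proof. by move=> hp; elim: l => [|l ih]; [rewrite mulr0n; apply: hom0 | rewrite mulrS; apply: homD]. Qed.

Lemma hom_sum f k (I : Type) (r : seq I) (Pr : pred I) (F : I -> P) :
  (forall i, Pr i -> hom f k (F i)) -> hom f k (\sum_(i <- r | Pr i) F i).
Proof.
move=> h; elim/big_rec: _ => [|i x Pi hx]; first exact: hom0.
by apply: homD => //; apply: h.
Qed.

Lemma homM f a b p q : hom f a p -> hom f b q -> hom f (a + b) (p * q).
Proof.
move=> hp hq mo; rewrite mcoeffM; apply: contraNeq => ne.
rewrite big1 // => k /eqP e.
have [/hp ea|/negPn/eqP ->] := boolP (p@_k.1 != 0); last by rewrite mul0r.
have [/hq eb|/negPn/eqP ->] := boolP (q@_k.2 != 0); last by rewrite mulr0.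
by move: ne; rewrite [dg f mo]( _ : _ = dg f (k.1 + k.2)%MM) ?(e, dgD, ea, eb, eqxx) //; rewrite -e.
Qed.

Lemma homX f i : hom f (dg f U_(i)) ('X_i : P).
Proof. move=> mo; rewrite mcoeffX; case: (U_(i)%MM =P mo) => [<- //|_]; by rewrite mulr0n eqxx. Qed.

Lemma homC f c : hom f 0 (c%:MP : P).
Proof.
move=> mo; rewrite mcoeffC; case: (mo =P 0%MM) => [->|_]; last by rewrite mulr0n mulr0 eqxx.
by rewrite /dg big1 // => j _; rewrite mnm0E.
Qed.

Lemma hom1 f : hom f 0 (1 : P).
Proof. by rewrite -mpolyC1; apply: homC. Qed.

Lemma homXn f i k : hom f (dg f U_(i) * k) ('X_i ^+ k : P).
Proof.
elim: k => [|k ih]; first by rewrite muln0 expr0; apply: hom1.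
by rewrite exprS mulnS; apply: homM => //; apply: homX.
Qed.

Lemma hom_derivE f k i p mo : hom f k p -> (mderiv i p)@_mo != 0 ->
  (dg f mo + dg f U_(i))%N = k.
Proof.
move=> hp; rewrite mcoeff_mderiv; have [/hp <-|/negPn/eqP ->] := boolP (p@_(mo + U_(i))%MM != 0).
  by rewrite dgD.
by rewrite mul0rn eqxx.
Qed.

Lemma hom_deriv f k i p : hom f k p -> hom f (k - dg f U_(i)) (mderiv i p).
Proof. by move=> hp mo /(hom_derivE hp) <-; rewrite addnK. Qed.

Lemma hom_deriv0 f i p : hom f 0 p -> (0 < dg f U_(i))%N -> mderiv i p = 0.
Proof.
move=> hp hu; apply/mpolyP => mo; rewrite mcoeff0; apply/eqP; apply: contraTT hu.
by move=> /(hom_derivE hp) /eqP; rewrite addn_eq0 => /andP [_ /eqP ->].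
Qed.

Lemma hom_uniq f k k' p : hom f k p -> hom f k' p -> p != 0 -> k = k'.
Proof.
move=> h1 h2; rewrite -msupp_eq0; case E: (msupp p) => [|mo s] // _.
have : mo \in msupp p by rewrite E mem_head.
by rewrite mcoeff_msupp => nz; rewrite -(h1 _ nz) -(h2 _ nz).
Qed.

Lemma mcoeff_sum' (I : Type) (r : seq I) (Pr : pred I) (F : I -> P) mo :
  (\sum_(i <- r | Pr i) F i)@_mo = \sum_(i <- r | Pr i) (F i)@_mo.
Proof. by elim/big_rec2: _ => [|i x y _ <-]; rewrite ?mcoeff0 ?mcoeffD. Qed.

Lemma mderiv_sum' (I : Type) (r : seq I) (Pr : pred I) (F : I -> P) i :
  mderiv i (\sum_(k <- r | Pr k) F k) = \sum_(k <- r | Pr k) mderiv i (F k).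
Proof. by elim/big_rec2: _ => [|k x y _ <-]; rewrite ?mderiv0 ?mderivD. Qed.

Lemma mcoeffXD i (p : P) mo : ('X_i * mderiv i p)@_mo = p@_mo *+ mo i.
Proof.
rewrite mcoeffXiM mcoeff_mderiv; case: (posnP (mo i)) => h; first by rewrite h !mulr0n.
have le : (U_(i) <= mo)%MM.
  by apply/mnm_lepP => j; rewrite mnm1E; case: eqP => [<-|]; rewrite ?h.
by rewrite submK // mnmBE mnm1E eqxx subn1 prednK // mulr1n.
Qed.

Lemma euler f k (p : P) : hom f k p -> \sum_(j < m) Xv f j * Dv f j p = p *+ k.
Proof.
move=> hp; apply/mpolyP => mo; rewrite mcoeff_sum' mcoeffMn.
rewrite (eq_bigr (fun j => p@_mo *+ mo (f j))); last by move=> j _; rewrite DvE mcoeffXD.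
rewrite sumrMnr; have [/hp <- //|/negPn/eqP ->] := boolP (p@_mo != 0).
by rewrite !mul0rn.
Qed.

Lemma DvD f j (p q : P) : Dv f j (p + q) = Dv f j p + Dv f j q.
Proof. by rewrite !DvE mderivD. Qed.
Lemma DvZ f j c (p : P) : Dv f j (c *: p) = c *: Dv f j p.
Proof. by rewrite !DvE mderivZ. Qed.
Lemma DvN f j (p : P) : Dv f j (- p) = - Dv f j p.
Proof. by rewrite !DvE mderivN. Qed.
Lemma DvMn f j (p : P) k : Dv f j (p *+ k) = Dv f j p *+ k.
Proof. by rewrite !DvE mderivMn. Qed.
Lemma DvM f j (p q : P) : Dv f j (p * q) = Dv f j p * q + p * Dv f j q.
Proof. by rewrite !DvE mderivM. Qed.
Lemma Dv_sum f j (I : Type) (r : seq I) (Pr : pred I) (F : I -> P) :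
  Dv f j (\sum_(i <- r | Pr i) F i) = \sum_(i <- r | Pr i) Dv f j (F i).
Proof. by rewrite !DvE mderiv_sum'; apply: eq_bigr => i _; rewrite DvE. Qed.
Lemma Dv0 f j : Dv f j 0 = 0.
Proof. by rewrite !DvE mderiv0. Qed.

Lemma lapD f (p q : P) : lap f (p + q) = lap f p + lap f q.
Proof. by rewrite /lap -big_split; apply: eq_bigr => j _; rewrite !DvD. Qed.
Lemma lapZ f c (p : P) : lap f (c *: p) = c *: lap f p.
Proof. by rewrite /lap scaler_sumr; apply: eq_bigr => j _; rewrite !DvZ. Qed.
Lemma lapN f (p : P) : lap f (- p) = - lap f p.
Proof. by rewrite /lap -sumrN; apply: eq_bigr => j _; rewrite !DvN. Qed.
Lemma lapB f (p q : P) : lap f (p - q) = lap f p - lap f q.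
Proof. by rewrite lapD lapN. Qed.
Lemma lapMn f (p : P) k : lap f (p *+ k) = lap f p *+ k.
Proof. by rewrite /lap -sumrMnl; apply: eq_bigr => j _; rewrite !DvMn. Qed.
Lemma lap0 f : lap f 0 = 0.
Proof. by rewrite /lap big1 // => j _; rewrite !Dv0. Qed.
Lemma lap_sum f (I : Type) (r : seq I) (Pr : pred I) (F : I -> P) :
  lap f (\sum_(i <- r | Pr i) F i) = \sum_(i <- r | Pr i) lap f (F i).
Proof. by elim/big_rec2: _ => [|i x y _ <-]; rewrite ?lap0 ?lapD. Qed.

Lemma lap_comm f g (p : P) : lap f (lap g p) = lap g (lap f p).
Proof.
rewrite /lap.
transitivity (\sum_(j < m) \sum_(l < m) Dv f j (Dv f j (Dv g l (Dv g l p)))).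
  by apply: eq_bigr => j _; rewrite !Dv_sum.
rewrite exchange_big /=; apply: eq_bigr => l _; rewrite !Dv_sum.
apply: eq_bigr => j _; rewrite !DvE.
have sw q : mderiv (f j) (mderiv (g l) q) = mderiv (g l) (mderiv (f j) q).
  exact: mderiv_comm.
by rewrite !sw.
Qed.

Section Dir.
Variables (f g : 'I_m -> 'I_n).
Hypotheses (finj : injective f) (ginj : injective g) (fg : forall j l, f j != g l).

Lemma DvX j l : Dv f j (Xv f l) = (l == j)%:R.
Proof. by rewrite DvE /Xv mderivXi (inj_eq finj). Qed.

Lemma DvX' j l : Dv g j (Xv f l) = 0.
Proof. by rewrite DvE /Xv mderivXi (negbTE (fg _ _)). Qed.

Lemma Dv_nrm j : Dv f j (nrm f) = Xv f j *+ 2.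
Proof.
rewrite /nrm Dv_sum (bigD1 j) //= big1 ?addr0.
  by rewrite expr2 DvM DvX eqxx mul1r mulr1 mulr2n.
move=> l hl; rewrite expr2 DvM DvX (negbTE hl).
by rewrite mul0r mulr0 addr0.
Qed.

Lemma Dv_nrm' j : Dv g j (nrm f) = 0.
Proof.
rewrite /nrm Dv_sum big1 // => l _.
by rewrite expr2 DvM DvX' mul0r mulr0 addr0.
Qed.

Lemma lap_nrm k (p : P) : hom f k p ->
  lap f (nrm f * p) = p *+ (2 * m + 4 * k) + nrm f * lap f p.
Proof.
move=> hp; rewrite /lap.
have e j : Dv f j (Dv f j (nrm f * p)) =
   p *+ 2 + (Xv f j * Dv f j p) *+ 4 + nrm f * Dv f j (Dv f j p).
  rewrite DvM Dv_nrm DvD !DvM Dv_nrm DvMn DvX eqxx /=.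
  ring.
rewrite (eq_bigr _ (fun j _ => e j)) !big_split /= -mulr_sumr (euler hp).
rewrite sumr_const card_ord -!mulrnDr; congr (_ + _); congr (_ *+ _); lia.
Qed.

Lemma lap_nrm' (p : P) : lap g (nrm f * p) = nrm f * lap g p.
Proof.
rewrite /lap mulr_sumr; apply: eq_bigr => j _.
by rewrite !DvM Dv_nrm' mul0r add0r DvM Dv_nrm' mul0r add0r.
Qed.

Lemma hom_Dv k j (p : P) : hom f k p -> hom f (k - 1) (Dv f j p).
Proof. by move=> hp; have := hom_deriv (i:=f j) hp; rewrite dgU // DvE. Qed.

Lemma hom_Dv0 j (p : P) : hom f 0 p -> Dv f j p = 0.
Proof. by move=> hp; rewrite DvE; apply: hom_deriv0 hp _; rewrite dgU. Qed.

Lemma hom_Dv' k j (p : P) : hom g k p -> hom g k (Dv f j p).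
Proof.
move=> hp; have := hom_deriv (i:=f j) hp; rewrite DvE dgU0 ?subn0 // => l.
by rewrite eq_sym fg.
Qed.

Lemma hom_lap k (p : P) : hom f k p -> hom f (k - 2) (lap f p).
Proof.
move=> hp; apply: hom_sum => j _; rewrite (_ : (k - 2 = k - 1 - 1)%N); last by lia.
by apply: hom_Dv; apply: hom_Dv.
Qed.

Lemma hom_lap0 k (p : P) : hom f k p -> (k < 2)%N -> lap f p = 0.
Proof.
move=> hp; rewrite /lap; case: k hp => [|[|//]] hp _; rewrite big1 // => j _.
  by rewrite (hom_Dv0 _ hp) Dv0.
by apply: hom_Dv0; exact: (hom_Dv (j:=j) hp).
Qed.

Lemma hom_lap' k (p : P) : hom g k p -> hom g k (lap f p).
Proof. by move=> hp; apply: hom_sum => j _; do 2 apply: hom_Dv'. Qed.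

Lemma hom_nrm : hom f 2 (nrm f).
Proof.
by apply: hom_sum => j _; have := @homXn f (f j) 2; rewrite dgU.
Qed.

Lemma hom_nrm' : hom g 0 (nrm f).
Proof.
apply: hom_sum => j _; have := @homXn g (f j) 2; rewrite dgU0 // => l.
by rewrite eq_sym fg.
Qed.

Definition cst k := (2 * m + 4 * k)%N.

Fixpoint sol (k a : nat) (r : P) : P :=
  match k with
  | k'.+2 => (a%:R^-1) *: (r - nrm f * sol k' (a + cst k') (lap f r))
  | _ => (a%:R^-1) *: r
  end.

Lemma natC_neq0 a : (0 < a)%N -> (a%:R : C) != 0.
Proof. by rewrite pnatr_eq0 -lt0n. Qed.

Lemma sol_spec k a r : (0 < a)%N -> hom f k r ->
  a%:R *: sol k a r + nrm f * lap f (sol k a r) = r /\ hom f k (sol k a r).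
Proof.
elim/ltn_ind: k a r => k IH a r ha hr.
case: k IH hr => [|[|k]] IH hr /=.
- rewrite lapZ (hom_lap0 hr) // scaler0 mulr0 addr0 scalerA mulfV ?natC_neq0 //.
  by rewrite scale1r; split => //; apply: homZ.
- rewrite lapZ (hom_lap0 hr) // scaler0 mulr0 addr0 scalerA mulfV ?natC_neq0 //.
  by rewrite scale1r; split => //; apply: homZ.
have hk : (0 < a + cst k)%N by rewrite addn_gt0 ha.
have hl := hom_lap hr; rewrite !subSS ?subn0 in hl.
have [e1 h1] := IH k (leqW (ltnSn k)) (a + cst k)%N (lap f r) hk hl.
set g' := sol k (a + cst k) (lap f r) in e1 h1 *.
have ls : lap f (a%:R^-1 *: (r - nrm f * g')) = g'.
  rewrite lapZ lapB (lap_nrm h1) -{1}e1 natrD scalerDl !scaler_nat /cst.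
  rewrite -[X in X - _]addrA addrK.
  by rewrite -(scaler_nat a g') scalerA mulVf ?natC_neq0 // scale1r.
rewrite ls scalerA mulfV ?natC_neq0 // scale1r subrK; split; first by [].
apply: homZ; apply: homB; first exact: hr.
rewrite -[k.+2]/(2 + k)%N.
by apply: homM; [apply: hom_nrm | exact: h1].
Qed.

Lemma sol_hom' q k a r : hom g q r -> hom g q (sol k a r).
Proof.
elim/ltn_ind: k a r => k IH a r hr.
case: k IH => [|[|k]] IH /=; [by apply: homZ | by apply: homZ |].
apply: homZ; apply: homB; first exact: hr.
rewrite -[q]add0n; apply: homM.
  by apply: hom_nrm'.
by apply: IH => //; apply: hom_lap'.
Qed.

Lemma sol_lap' k a r : lap g (sol k a r) = sol k a (lap g r).
Proof.
elim/ltn_ind: k a r => k IH a r.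
case: k IH => [|[|k]] IH /=; [by rewrite lapZ | by rewrite lapZ |].
by rewrite lapZ lapB lap_nrm' (IH k (leqW (ltnSn k))) lap_comm.
Qed.

Lemma sol0 k a : sol k a 0 = 0.
Proof.
elim/ltn_ind: k a => k IH a.
case: k IH => [|[|k]] IH /=; [by rewrite scaler0 | by rewrite scaler0 |].
by rewrite lap0 (IH k (leqW (ltnSn k))) mulr0 subr0 scaler0.
Qed.

Definition Gd k (r : P) : P := if k is k'.+2 then sol k' (cst k') (lap f r) else 0.
Definition Hd k (r : P) : P := r - nrm f * Gd k r.

Hypothesis m0 : (0 < m)%N.

Lemma Hd_lap k r : hom f k r -> lap f (Hd k r) = 0.
Proof.
move=> hr; rewrite /Hd /Gd; case: k hr => [|[|k]] hr.
- by rewrite mulr0 subr0 (hom_lap0 hr (isT : (0 < 2)%N)).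
- by rewrite mulr0 subr0 (hom_lap0 hr (isT : (1 < 2)%N)).
have cp : (0 < cst k)%N by rewrite /cst addn_gt0 muln_gt0 m0.
have hl := hom_lap hr; rewrite !subSS ?subn0 in hl.
have [e1 h1] := sol_spec cp hl.
by rewrite lapB (lap_nrm h1) -scaler_nat e1 subrr.
Qed.

Lemma Gd_hom k r : hom f k r -> hom f (k - 2) (Gd k r).
Proof.
move=> hr; rewrite /Gd; case: k hr => [|[|k]] hr; try exact: hom0.
have cp : (0 < cst k)%N by rewrite /cst addn_gt0 muln_gt0 m0.
have hl := hom_lap hr; rewrite !subSS ?subn0 in hl.
by have [_ h1] := sol_spec cp hl; rewrite !subSS ?subn0.
Qed.

Lemma Hd_hom k r : hom f k r -> hom f k (Hd k r).
Proof.
move=> hr; rewrite /Hd; apply: homB; first exact: hr.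
case: k hr => [|[|k]] hr; rewrite /Gd ?mulr0; try exact: hom0.
have := Gd_hom hr; rewrite /Gd !subSS ?subn0 => h.
by rewrite -[k.+2]/(2 + k)%N; apply: homM; [apply: hom_nrm | exact: h].
Qed.

Lemma Gd_hom' q k r : hom g q r -> hom g q (Gd k r).
Proof.
move=> hr; rewrite /Gd; case: k => [|[|k]]; try exact: hom0.
by apply: sol_hom'; apply: hom_lap'.
Qed.

Lemma Hd_hom' q k r : hom g q r -> hom g q (Hd k r).
Proof.
move=> hr; rewrite /Hd; apply: homB; first exact: hr.
rewrite -[q]add0n; apply: homM.
  exact: hom_nrm'.
exact: Gd_hom'.
Qed.

Lemma Gd_lap' k r : lap g r = 0 -> lap g (Gd k r) = 0.
Proof.
move=> hr; rewrite /Gd; case: k => [|[|k]]; rewrite ?lap0 //.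
by rewrite sol_lap' lap_comm hr lap0 sol0.
Qed.

Lemma Hd_lap' k r : lap g r = 0 -> lap g (Hd k r) = 0.
Proof. by move=> hr; rewrite /Hd lapB lap_nrm' (Gd_lap' _ hr) mulr0 hr subr0. Qed.

Lemma Gd_small k r : (k < 2)%N -> Gd k r = 0.
Proof. by case: k => [|[|k]]. Qed.

Lemma HdE k r : r = Hd k r + nrm f * Gd k r.
Proof. by rewrite /Hd subrK. Qed.

Fixpoint comp k r a : P := if a is a'.+1 then comp (k - 2)%N (Gd k r) a' else Hd k r.

Lemma comp_sum k r : hom f k r ->
  r = \sum_(a < k./2.+1) nrm f ^+ a * comp k r a.
Proof.
elim/ltn_ind: k r => k IH r hr.
case: k IH hr => [|[|k]] IH hr.
- by rewrite big_ord_recl big_ord0 addr0 expr0 mul1r /= /Hd Gd_small // mulr0 subr0.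
- by rewrite big_ord_recl big_ord0 addr0 expr0 mul1r /= /Hd Gd_small // mulr0 subr0.
rewrite big_ord_recl expr0 mul1r /=.
have hG := Gd_hom hr; rewrite !subSS subn0 in hG.
rewrite {1}(HdE k.+2 r) {1}(IH k (leqW (ltnSn k)) _ hG) mulr_sumr.
congr (_ + _); apply: eq_bigr => a _.
by rewrite /bump /= add1n exprS mulrA !subSS subn0.
Qed.

Lemma comp_props a k r q : (2 * a <= k)%N -> hom f k r -> hom g q r ->
  [/\ lap f (comp k r a) = 0, hom f (k - 2 * a)%N (comp k r a),
      hom g q (comp k r a) & (lap g r = 0 -> lap g (comp k r a) = 0)].
Proof.
elim: a k r => [|a IH] k r ha hr hq /=.
  rewrite muln0 subn0; split; [exact: Hd_lap | exact: Hd_hom | exact: Hd_hom' |].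
  exact: Hd_lap'.
have ha' : (2 * a <= k - 2)%N by lia.
have hG := Gd_hom hr.
have [h1 h2 h3 h4] := IH (k - 2)%N (Gd k r) ha' hG (Gd_hom' (k:=k) hq).
split => //.
  by rewrite (_ : (k - 2 * a.+1 = k - 2 - 2 * a)%N) //; lia.
by move=> /Gd_lap' /h4.
Qed.
End Dir.
End Work.

End W1.
Import W1.

Module W2.


Section Work2.
Variables (R : rcfType) (m : nat).
Local Notation C := R[i].
Local Notation n := (m + m)%N.
Local Notation P := {mpoly C[n]}.
Local Notation nrm := (@nrm R m).
Local Notation lap := (@lap R m).
Local Notation Xv := (@Xv R m).
Local Notation Dv := (@Dv R m).
Local Notation hom := (@hom R m).

Definition mfact (mo : 'X_{1..n}) : nat := (\prod_(i < n) (mo i)`!)%N.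
Definition ip (p q : P) : C :=
  \sum_(mo <- msupp p) p@_mo * conjc (q@_mo) * (mfact mo)%:R.

Lemma ip_ext s (p q : P) : uniq s -> {subset msupp p <= s} ->
  ip p q = \sum_(mo <- s) p@_mo * conjc (q@_mo) * (mfact mo)%:R.
Proof.
move=> us sub; rewrite /ip.
rewrite [in RHS](bigID (fun mo => mo \in msupp p)) /= [X in _ + X]big1 ?addr0; last first.
  by move=> mo; rewrite mcoeff_msupp negbK => /eqP ->; rewrite !mul0r.
rewrite -[in RHS]big_filter; apply: perm_big; apply: uniq_perm.
- exact: msupp_uniq.
- exact: filter_uniq.
by move=> mo; rewrite mem_filter; case: (boolP (mo \in msupp p)) => // /sub ->.
Qed.

Lemma ipDl (p1 p2 q : P) : ip (p1 + p2) q = ip p1 q + ip p2 q.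
Proof.
have u := undup_uniq (msupp p1 ++ msupp p2).
rewrite !(ip_ext (s := undup (msupp p1 ++ msupp p2))) //.
- by rewrite -big_split; apply: eq_bigr => mo _; rewrite mcoeffD !mulrDl.
- by move=> mo h; rewrite mem_undup mem_cat h orbT.
- by move=> mo h; rewrite mem_undup mem_cat h.
by move=> mo /msuppD_le; rewrite mem_undup.
Qed.

Lemma ip0l (q : P) : ip 0 q = 0.
Proof. by rewrite /ip msupp0 big_nil. Qed.

Lemma ipDr (p q1 q2 : P) : ip p (q1 + q2) = ip p q1 + ip p q2.
Proof.
rewrite /ip -big_split; apply: eq_bigr => mo _.
by rewrite mcoeffD rmorphD /= !mulrDr !mulrDl.
Qed.

Lemma ip0r (p : P) : ip p 0 = 0.
Proof.
by rewrite /ip big1 // => mo _; rewrite mcoeff0 rmorph0 mulr0 mul0r.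
Qed.

Lemma ip_suml (I : Type) (r : seq I) (F : I -> P) q :
  ip (\sum_(i <- r) F i) q = \sum_(i <- r) ip (F i) q.
Proof. by elim/big_rec2: _ => [|i x y _ <-]; rewrite ?ip0l ?ipDl. Qed.

Lemma ip_sumr (I : Type) (r : seq I) (F : I -> P) p :
  ip p (\sum_(i <- r) F i) = \sum_(i <- r) ip p (F i).
Proof. by elim/big_rec2: _ => [|i x y _ <-]; rewrite ?ip0r ?ipDr. Qed.

Lemma mfactU (mo : 'X_{1..n}) i : mfact (mo + U_(i))%MM = ((mo i).+1 * mfact mo)%N.
Proof.
rewrite /mfact (bigD1 i) //= [in RHS](bigD1 i) //= mnmDE mnm1E eqxx addn1 factS.
rewrite mulnA; congr (_ * _)%N; apply: eq_bigr => j hj.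
by rewrite mnmDE mnm1E eq_sym (negbTE hj) addn0.
Qed.

Lemma ip_adj i (p h : P) : ip ('X_i * p) h = ip p (mderiv i h).
Proof.
have inj : injective (fun mo : 'X_{1..n} => (mo + U_(i))%MM).
  by move=> a b /=; apply: addIm.
rewrite (ip_ext (s := [seq (mo + U_(i))%MM | mo <- msupp p])).
- rewrite big_map /ip; apply: eq_bigr => mo _.
  rewrite mcoeffXiM addmK mnmDE mnm1E eqxx addn1 mulr1n mcoeff_mderiv.
  rewrite mfactU rmorphMn /= natrM; ring.
- by rewrite map_inj_uniq // msupp_uniq.
move=> mo; rewrite mcoeff_msupp mcoeffXiM.
case: (posnP (mo i)) => h0; first by rewrite mulr0n eqxx.
rewrite mulr1n -mcoeff_msupp => hin; apply/mapP; exists (mo - U_(i))%MM => //.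
rewrite submK //; apply/mnm_lepP => j; rewrite mnm1E.
by case: eqP => [<-|]; rewrite ?h0.
Qed.

Lemma ip_nrm (f : 'I_m -> 'I_n) (g h : P) : ip (nrm f * g) h = ip g (lap f h).
Proof.
rewrite /nrm /lap mulr_suml ip_suml ip_sumr; apply: eq_bigr => j _.
by rewrite /Xv expr2 -mulrA !ip_adj !DvE.
Qed.

Lemma mfact_gt0 mo : (0 < mfact mo)%N.
Proof. by apply: prodn_gt0 => i; apply: fact_gt0. Qed.

Lemma ip_eq0 (h : P) : ip h h = 0 -> h = 0.
Proof.
move=> /eqP; rewrite /ip psumr_eq0; last first.
  by move=> mo _; rewrite -sqr_normc mulr_ge0 ?exprn_ge0 ?normr_ge0 ?ler0n.
move=> /allP hall; apply/eqP; rewrite -msupp_eq0.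
case E: (msupp h) => [|mo s] //.
have hin : mo \in msupp h by rewrite E mem_head.
have := hall mo hin; rewrite implyTb -sqr_normc mulf_eq0 pnatr_eq0.
rewrite eqn0Ngt mfact_gt0 orbF sqrf_eq0 normr_eq0 => /eqP h0.
by move: hin; rewrite mcoeff_msupp h0 eqxx.
Qed.

Lemma harm_uniq (h g1 g2 : P) : lapx h = 0 -> lapu h = 0 ->
  h = @normx2 R m * g1 + @normu2 R m * g2 -> h = 0.
Proof.
move=> hx hu e; apply: ip_eq0.
have lx : lapx h = lap (@lshift m m) h.
  by rewrite /lapx /lap; apply: eq_bigr => j _; rewrite !DvE.
have lu : lapu h = lap (@rshift m m) h.
  by rewrite /lapu /lap; apply: eq_bigr => j _; rewrite !DvE.
rewrite {1}e ipDl.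
rewrite (_ : @normx2 R m = nrm (@lshift m m)) // (_ : @normu2 R m = nrm (@rshift m m)) //.
by rewrite !ip_nrm -lx -lu hx hu !ip0r addr0.
Qed.
End Work2.

End W2.
Import W2.

Module W3.


Section Work3.
Variables (R : rcfType) (m : nat).
Hypothesis m0 : (0 < m)%N.
Local Notation C := R[i].
Local Notation n := (m + m)%N.
Local Notation P := {mpoly C[n]}.
Local Notation nrm := (@W1.nrm R m).
Local Notation lap := (@W1.lap R m).
Local Notation hom := (@W1.hom R m).
Local Notation comp := (@W1.comp R m).
Local Notation L := (@lshift m m).
Local Notation Rs := (@rshift m m).
Local Notation nx := (@normx2 R m).
Local Notation nu := (@normu2 R m).

Lemma Linj : injective L. Proof. exact: lshift_inj. Qed.
Lemma Rinj : injective Rs. Proof. exact: rshift_inj. Qed.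
Lemma LR j l : L j != Rs l. Proof. by rewrite eq_lrshift. Qed.
Lemma RL j l : Rs j != L l. Proof. by rewrite eq_rlshift. Qed.

Lemma lapxE (p : P) : lapx p = lap L p.
Proof. by rewrite /lapx /W1.lap; apply: eq_bigr => j _; rewrite !DvE. Qed.
Lemma lapuE (p : P) : lapu p = lap Rs p.
Proof. by rewrite /lapu /W1.lap; apply: eq_bigr => j _; rewrite !DvE. Qed.
Lemma nxE : nx = nrm L. Proof. by []. Qed.
Lemma nuE : nu = nrm Rs. Proof. by []. Qed.

Lemma bihomE p q (f : P) : bihomog p q f <-> hom L p f /\ hom Rs q f.
Proof.
split; first by move=> h; split => mo /h [].
by move=> [h1 h2] mo nz; split; [exact: h1 | exact: h2].
Qed.

Lemma harmE (f : P) : harmonic f <-> lap L f = 0 /\ lap Rs f = 0.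
Proof. by rewrite /harmonic lapxE lapuE. Qed.

Lemma sdecomp_ex p q (f : P) : bihomog p q f -> exists Hf, sdecomp p q f Hf.
Proof.
move=> /bihomE [hp hq].
exists (fun a b => comp Rs q (comp L p f a) b); split; [by apply/bihomE|split].
  move=> a b ha hb.
  have [l1 h1 h2 _] := comp_props Linj LR m0 ha hp hq.
  have [l2 h3 h4 l3] := comp_props Rinj RL m0 hb h2 h1.
  by split; [apply/bihomE | apply/harmE; split => //; apply: l3].
rewrite {1}(comp_sum Linj m0 hp); apply: eq_bigr => a _.
have ha : (2 * a <= p)%N.
  by have := ltn_ord a; rewrite ltnS geq_half_double -mul2n.
have [_ _ h2 _] := comp_props Linj LR m0 ha hp hq.
rewrite {1}(comp_sum Rinj m0 h2) mulr_sumr; apply: eq_bigr => b _.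
by rewrite mulrA.
Qed.

Lemma sum_split N M (F : nat -> nat -> P) : exists X Y,
  \sum_(a < N.+1) \sum_(b < M.+1) nx ^+ a * nu ^+ b * F a b =
  F 0%N 0%N + nx * X + nu * Y.
Proof.
exists (\sum_(a < N) \sum_(b < M.+1) nx ^+ a * nu ^+ b * F a.+1 b).
exists (\sum_(b < M) nu ^+ b * F 0%N b.+1).
rewrite big_ord_recl big_ord_recl /= expr0 !mul1r mulr_sumr.
rewrite -addrA -[RHS]addrA; congr (_ + _); rewrite addrC; congr (_ + _).
  apply: eq_bigr => a _; rewrite mulr_sumr; apply: eq_bigr => b _.
  by rewrite /bump /= add1n exprS !mulrA.
rewrite mulr_sumr; apply: eq_bigr => b _.
by rewrite /bump /= add1n exprS mul1r !mulrA.
Qed.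

Lemma harmB (f g : P) : harmonic f -> harmonic g -> harmonic (f - g).
Proof.
move=> /harmE [h1 h2] /harmE [h3 h4]; apply/harmE.
by rewrite !lapB h1 h2 h3 h4 subrr.
Qed.

Lemma pisE p q (f h g1 g2 : P) : bihomog p q f -> harmonic h ->
  f = h + nx * g1 + nu * g2 -> pis f = h.
Proof.
move=> hf hh ef.
have [Hf dec] := sdecomp_ex hf.
have ex : exists H, exists p q Hf, sdecomp p q f Hf /\ H = Hf 0%N 0%N.
  by exists (Hf 0%N 0%N), p, q, Hf.
have := epsilon_spec (inhabits (0 : P)) _ ex.
rewrite -/(pis f) => -[p' [q' [Hf' [[_ [hH e'] ] ->]]]].
have [_ h00] := hH 0%N 0%N (leq0n _) (leq0n _).

have [X [Y eXY]] := sum_split (p'./2) (q'./2) Hf'.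
rewrite eXY in e'.
have := harmB hh h00.
have e2 : h - Hf' 0%N 0%N = nx * (X - g1) + nu * (Y - g2).
  have e3 : h = f - nx * g1 - nu * g2 by rewrite ef; ring.
  rewrite e3 {1}e'; ring.
move=> hd; have := hd; case=> d1 d2.
by have /eqP := harm_uniq d1 d2 e2; rewrite subr_eq0 => /eqP ->.
Qed.
End Work3.

End W3.
Import W3.

Module W4.


Section Work4.
Variables (R : rcfType) (m : nat).
Local Notation C := R[i].
Local Notation n := (m + m)%N.
Local Notation P := {mpoly C[n]}.
Local Notation nrm := (@W1.nrm R m).
Local Notation lap := (@W1.lap R m).
Local Notation hom := (@W1.hom R m).
Local Notation Xv := (@W1.Xv R m).
Local Notation Dv := (@W1.Dv R m).

Definition op (f g : 'I_m -> 'I_n) (H : P) : P := \sum_(j < m) Xv f j * Dv g j H.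
Definition dd (f g : 'I_m -> 'I_n) (H : P) : P := \sum_(j < m) Dv f j (Dv g j H).
Definition xy (f g : 'I_m -> 'I_n) : P := \sum_(j < m) Xv f j * Xv g j.

Lemma sum_delta (i : 'I_m) (K : 'I_m -> P) :
  \sum_(j < m) (j == i)%:R * K j = K i.
Proof.
rewrite (bigD1 i) //= eqxx mul1r big1 ?addr0 // => j hj.
by rewrite (negbTE hj) mul0r.
Qed.

Lemma sum_delta' (i : 'I_m) (K : 'I_m -> P) :
  \sum_(j < m) (i == j)%:R * K j = K i.
Proof. by rewrite -(sum_delta i K); apply: eq_bigr => j _; rewrite eq_sym. Qed.

Lemma Dv_comm f g i j (H : P) : Dv f i (Dv g j H) = Dv g j (Dv f i H).
Proof. by rewrite !DvE mderiv_comm. Qed.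

Lemma lap_Dv f g j (H : P) : lap f (Dv g j H) = Dv g j (lap f H).
Proof.
rewrite /W1.lap Dv_sum; apply: eq_bigr => i _.
by rewrite (Dv_comm f g i j H) (Dv_comm f g i j).
Qed.

Lemma lap_dd h f g (H : P) : lap h (dd f g H) = dd f g (lap h H).
Proof.
rewrite /dd lap_sum; apply: eq_bigr => j _; by rewrite !lap_Dv.
Qed.

Lemma dd_comm f g (H : P) : dd f g H = dd g f H.
Proof. by rewrite /dd; apply: eq_bigr => j _; rewrite Dv_comm. Qed.

Section Dir2.
Variables (f g : 'I_m -> 'I_n).
Hypotheses (finj : injective f) (ginj : injective g) (fg : forall j l, f j != g l)
  (gf : forall j l, g j != f l).

Lemma DvXM i j (K : P) : Dv f i (Xv f j * K) = (j == i)%:R * K + Xv f j * Dv f i K.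
Proof. by rewrite DvM (DvX R finj). Qed.

Lemma DvXM' i j (K : P) : Dv g i (Xv f j * K) = Xv f j * Dv g i K.
Proof. by rewrite DvM (DvX' R fg) mul0r add0r. Qed.

Lemma lapXM j (K : P) : lap f (Xv f j * K) = Dv f j K *+ 2 + Xv f j * lap f K.
Proof.
rewrite /W1.lap.
have e i : Dv f i (Dv f i (Xv f j * K)) =
   ((j == i)%:R * Dv f i K) *+ 2 + Xv f j * Dv f i (Dv f i K).
  rewrite DvXM DvD DvM DvXM.
  have -> : Dv f i ((j == i)%:R : P) = 0.
    by case: (j == i); rewrite /= ?Dv0 // -(mpolyC1) DvE mderivC.
  ring.
rewrite (eq_bigr _ (fun i _ => e i)) big_split /= -mulr_sumr sumrMnl.
by rewrite (sum_delta' j (fun i => Dv f i K)).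
Qed.

Lemma lapXM' j (K : P) : lap g (Xv f j * K) = Xv f j * lap g K.
Proof.
rewrite /W1.lap mulr_sumr; apply: eq_bigr => i _.
by rewrite !DvXM'.
Qed.

Lemma lap_op_same (H : P) : lap f (op f g H) = (dd f g H) *+ 2 + op f g (lap f H).
Proof.
rewrite /op lap_sum (eq_bigr _ (fun j _ => lapXM j _)) big_split /= sumrMnl.
congr (_ + _); apply: eq_bigr => j _; by rewrite lap_Dv.
Qed.

Lemma lap_op_other (H : P) : lap g (op f g H) = op f g (lap g H).
Proof.
rewrite /op lap_sum; apply: eq_bigr => j _; by rewrite lapXM' lap_Dv.
Qed.

Lemma op_nrm (K : P) : op f g (nrm g * K) = nrm g * op f g K + (xy f g * K) *+ 2.
Proof.
rewrite /op /xy.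
have e j : Xv f j * Dv g j (nrm g * K) =
   nrm g * (Xv f j * Dv g j K) + (Xv f j * Xv g j * K) *+ 2.
  rewrite DvM (Dv_nrm R ginj); ring.
rewrite (eq_bigr _ (fun j _ => e j)) big_split /= -mulr_sumr sumrMnl mulr_suml.
congr (_ + _); by rewrite mulr_suml.
Qed.

Lemma op_comm (H : P) :
  op f g (op g f H) - op g f (op f g H) = op f f H - op g g H.
Proof.
rewrite /op.
have e1 i : Xv f i * Dv g i (\sum_(j < m) Xv g j * Dv f j H) =
   Xv f i * Dv f i H + \sum_(j < m) Xv f i * Xv g j * Dv g i (Dv f j H).
  rewrite Dv_sum.
  have e : forall j, Dv g i (Xv g j * Dv f j H) =
      (j == i)%:R * Dv f j H + Xv g j * Dv g i (Dv f j H).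
    by move=> j; rewrite DvM (DvX R ginj).
  rewrite (eq_bigr _ (fun j _ => e j)) big_split /= sum_delta mulrDr mulr_sumr.
  by congr (_ + _); apply: eq_bigr => j _; rewrite mulrA.
have e2 i : Xv g i * Dv f i (\sum_(j < m) Xv f j * Dv g j H) =
   Xv g i * Dv g i H + \sum_(j < m) Xv g i * Xv f j * Dv f i (Dv g j H).
  rewrite Dv_sum.
  have e : forall j, Dv f i (Xv f j * Dv g j H) =
      (j == i)%:R * Dv g j H + Xv f j * Dv f i (Dv g j H).
    by move=> j; rewrite DvM (DvX R finj).
  rewrite (eq_bigr _ (fun j _ => e j)) big_split /= sum_delta mulrDr mulr_sumr.
  by congr (_ + _); apply: eq_bigr => j _; rewrite mulrA.
rewrite (eq_bigr _ (fun i _ => e1 i)) (eq_bigr _ (fun i _ => e2 i)) !big_split /=.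
have -> : \sum_(i < m) \sum_(j < m) Xv g i * Xv f j * Dv f i (Dv g j H) =
          \sum_(i < m) \sum_(j < m) Xv f i * Xv g j * Dv g i (Dv f j H).
  rewrite exchange_big /=; apply: eq_bigr => i _; apply: eq_bigr => j _.
  by rewrite (Dv_comm f g j i H) [Xv g j * _]mulrC.
set A := \sum_(i < m) \sum_(j < m) _.
set B := \sum_(i < m) Xv f i * Dv f i H.
set D := \sum_(i < m) Xv g i * Dv g i H.
ring.
Qed.

Lemma hom_op_same k (H : P) : hom f k H -> hom f (k + 1) (op f g H).
Proof.
move=> hH; apply: hom_sum => j _; rewrite addnC; apply: homM.
  by have := @homX R m f (f j); rewrite dgU.
exact: (hom_Dv' gf hH).
Qed.

Lemma hom_op_other k (H : P) : hom g k H -> hom g (k - 1) (op f g H).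
Proof.
move=> hH; apply: hom_sum => j _; rewrite -[(k - 1)%N]add0n; apply: homM.
  by have := @homX R m g (f j); rewrite dgU0.
exact: (hom_Dv ginj hH).
Qed.

Lemma hom_dd k (H : P) : hom f k H -> hom f (k - 1) (dd f g H).
Proof.
move=> hH; apply: hom_sum => j _; exact: (hom_Dv finj (hom_Dv' gf hH)).
Qed.

Lemma hom_dd' k (H : P) : hom g k H -> hom g (k - 1) (dd f g H).
Proof.
move=> hH; apply: hom_sum => j _; exact: (hom_Dv' fg (hom_Dv ginj hH)).
Qed.

Lemma dd0 (H : P) : hom g 0 H -> dd f g H = 0.
Proof.
move=> hH; rewrite /dd big1 // => j _.
by rewrite (hom_Dv0 ginj _ hH) Dv0.
Qed.

Lemma hom_xy k (K : P) : hom f k K -> hom f (k + 1) (xy f g * K).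
Proof.
move=> hK; rewrite addnC; apply: homM => //; apply: hom_sum => j _.
rewrite -[1%N]addn0; apply: homM.
  by have := @homX R m f (f j); rewrite dgU.
by have := @homX R m f (g j); rewrite dgU0.
Qed.
End Dir2.
End Work4.

End W4.
Import W4.

Module W5.


Section Work5.
Variables (R : rcfType) (m : nat).
Hypothesis m0 : (0 < m)%N.
Local Notation C := R[i].
Local Notation n := (m + m)%N.
Local Notation P := {mpoly C[n]}.
Local Notation nrm := (@W1.nrm R m).
Local Notation lap := (@W1.lap R m).
Local Notation hom := (@W1.hom R m).
Local Notation Xv := (@W1.Xv R m).
Local Notation Dv := (@W1.Dv R m).
Local Notation op := (@W4.op R m).
Local Notation dd := (@W4.dd R m).
Local Notation xy := (@W4.xy R m).
Local Notation L := (@lshift m m).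
Local Notation Rs := (@rshift m m).
Local Notation nx := (@normx2 R m).
Local Notation nu := (@normu2 R m).

Lemma xduE (f : P) : xdu f = op L Rs f.
Proof. by rewrite /xdu /op; apply: eq_bigr => j _; rewrite DvE. Qed.
Lemma udxE (f : P) : udx f = op Rs L f.
Proof. by rewrite /udx /op; apply: eq_bigr => j _; rewrite DvE. Qed.
Lemma dudxE (f : P) : dudx f = dd Rs L f.
Proof. by rewrite /dudx /dd; apply: eq_bigr => j _; rewrite !DvE. Qed.
Lemma uxE : @ux R m = xy Rs L.
Proof. by []. Qed.
Lemma xy_comm : xy Rs L = xy L Rs.
Proof. by rewrite /xy; apply: eq_bigr => j _; rewrite mulrC. Qed.

Lemma opB f g (p q : P) : op f g (p - q) = op f g p - op f g q.
Proof.
rewrite /op -sumrB; apply: eq_bigr => j _.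
by rewrite DvD DvN mulrDr mulrN.
Qed.
Lemma op0 f g : op f g 0 = 0.
Proof. by rewrite /op big1 // => j _; rewrite Dv0 mulr0. Qed.

Lemma harmZ c (f : P) : harmonic f -> harmonic (c *: f).
Proof. by move=> /harmE [h1 h2]; apply/harmE; rewrite !lapZ h1 h2 !scaler0. Qed.

Definition cong (f g : P) := exists X Y, f = g + nx * X + nu * Y.

Lemma pis_cong p q (f : P) : bihomog p q f -> harmonic (pis f) /\ cong f (pis f).
Proof.
move=> hf; have [Hf dec] := sdecomp_ex m0 hf.
have dec' := dec; case: dec' => [_ [hH e]].
have [X [Y eXY]] := sum_split (p./2) (q./2) Hf.
have [_ h00] := hH 0%N 0%N (leq0n _) (leq0n _).
rewrite eXY in e.
have -> := pisE m0 hf h00 e.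
by split => //; exists X, Y.
Qed.
End Work5.

End W5.
Import W5.

Module W6.


Lemma scal_id (F : fieldType) (a b M : F) :
  (2 : F) != 0 -> M + a + a != 0 -> M + b + b != 0 ->
  ((- (a + 1 + M / 2)) - (- (b + 1 + M / 2))) /
    ((1 - (a + 1 + M / 2)) * (1 - (b + 1 + M / 2))) =
  (2 / (2 * M + 4 * a)) *+ 2 - (2 / (2 * M + 4 * b)) *+ 2.
Proof.
move=> h2 ha hb.
have e1 : 1 - (a + 1 + M / 2) = - (M + a + a) / 2 by field.
have e2 : 1 - (b + 1 + M / 2) = - (M + b + b) / 2 by field.
have e3 : 2 * M + 4 * a = 2 * (M + a + a) by ring.
have e4 : 2 * M + 4 * b = 2 * (M + b + b) by ring.
rewrite e1 e2 e3 e4; field.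
by rewrite !oppr_eq0 ha hb h2.
Qed.

Lemma scal_id' (F : fieldType) (a b M dA dB : F) :
  (2 : F) != 0 -> M + a + a != 0 -> M + b + b != 0 ->
  dA = 2 * M + 4 * a -> dB = 2 * M + 4 * b ->
  ((- (a + 1 + M / 2)) - (- (b + 1 + M / 2))) /
    ((1 - (a + 1 + M / 2)) * (1 - (b + 1 + M / 2))) =
  (2 / dA) *+ 2 - (2 / dB) *+ 2.
Proof. by move=> h2 ha hb -> ->; apply: scal_id. Qed.

Section Work6.
Variables (R : rcfType) (m : nat).
Hypothesis m0 : (0 < m)%N.
Local Notation C := R[i].
Local Notation n := (m + m)%N.
Local Notation P := {mpoly C[n]}.
Local Notation nrm := (@W1.nrm R m).
Local Notation lap := (@W1.lap R m).
Local Notation hom := (@W1.hom R m).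
Local Notation op := (@W4.op R m).
Local Notation dd := (@W4.dd R m).
Local Notation xy := (@W4.xy R m).
Local Notation L := (@lshift m m).
Local Notation Rs := (@rshift m m).
Local Notation nx := (@normx2 R m).
Local Notation nu := (@normu2 R m).
Local Notation cong := (@W5.cong R m).
Local Notation Linj := (@W3.Linj m).
Local Notation Rinj := (@W3.Rinj m).
Local Notation LR := (@W3.LR m).
Local Notation RL := (@W3.RL m).

Lemma cong_refl (f : P) : cong f f.
Proof. by exists 0, 0; rewrite !mulr0 !addr0. Qed.
Lemma cong_sym (f g : P) : cong f g -> cong g f.
Proof. by move=> [X [Y ->]]; exists (- X), (- Y); ring. Qed.
Lemma cong_trans (f g h : P) : cong f g -> cong g h -> cong f h.
Proof.
by move=> [X [Y ->]] [X' [Y' ->]]; exists (X + X'), (Y + Y'); ring.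
Qed.
Lemma congB (f g f' g' : P) : cong f g -> cong f' g' -> cong (f - f') (g - g').
Proof.
by move=> [X [Y ->]] [X' [Y' ->]]; exists (X - X'), (Y - Y'); ring.
Qed.
Lemma congZ c (f g : P) : cong f g -> cong (c *: f) (c *: g).
Proof.
move=> [X [Y ->]]; exists (c *: X), (c *: Y).
by rewrite !scalerDr !scalerAr.
Qed.
Lemma cong_ideal (f X Y : P) : cong (f + nx * X + nu * Y) f.
Proof. by exists X, Y. Qed.

Lemma dd00 f g : dd f g 0 = 0.
Proof. by rewrite /W4.dd big1 // => j _; rewrite !Dv0. Qed.

Lemma main (p q : nat) (H : P) : bihomog p q H -> harmonic H ->
  Sx (Su H) - Su (Sx H) =
    ((@Hval R m p - @Hval R m q) / ((1 + @Hval R m p) * (1 + @Hval R m q)))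
      *: Cop (Aop H)
    - (@Hval R m p - @Hval R m q) *: H.
Proof.
move=> hb hh.
have [hp hq] := (bihomE p q H).1 hb.
have [lL lR] := (harmE H).1 hh.
set D := dd Rs L H.
have hDL : hom L (p - 1) D := hom_dd' Linj RL hp.
have hDR : hom Rs (q - 1) D := hom_dd Rinj LR hq.
have lDL : lap L D = 0 by rewrite /D lap_dd lL dd00.
have lDR : lap Rs D = 0 by rewrite /D lap_dd lR dd00.
have hD : harmonic D by apply/harmE.
have bD : bihomog (p - 1) (q - 1) D by apply/bihomE.
have Dq0 : q = 0%N -> D = 0.
  by move=> q0; rewrite /D dd_comm; apply: (dd0 L Rinj); rewrite -q0.
have Dp0 : p = 0%N -> D = 0.
  by move=> p0; rewrite /D; apply: (dd0 Rs Linj); rewrite -p0.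
have AopE : Aop H = D.
  rewrite /Aop dudxE; apply: (pisE m0 bD hD (g1:=0) (g2:=0)).
  by rewrite !mulr0 !addr0.
set cq : C := 2 / (2 * m + 4 * (q - 1))%N%:R.
set K := cq *: D.
set f1 := op Rs L H.
have lf1R : lap Rs f1 = D *+ 2.
  by rewrite /f1 (lap_op_same L Rinj) lR op0 addr0.
have lf1L : lap L f1 = 0 by rewrite /f1 (lap_op_other RL) lL op0.
have hK : hom Rs (q - 1) K by apply: homZ.
have hKL : hom L (p - 1) K by apply: homZ.
have NqP : ((2 * m + 4 * (q - 1))%N%:R : C) != 0.
  by rewrite pnatr_eq0 -lt0n addn_gt0 muln_gt0 m0.
have NpP : ((2 * m + 4 * (p - 1))%N%:R : C) != 0.
  by rewrite pnatr_eq0 -lt0n addn_gt0 muln_gt0 m0.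
set h1 := f1 - nu * K.
have h1harm : harmonic h1.
  apply/harmE; split.
    by rewrite /h1 lapB (lap_nrm' RL) lapZ lDL scaler0 mulr0 subr0 lf1L.
  rewrite /h1 lapB (lap_nrm Rinj hK) lapZ lDR scaler0 mulr0 addr0 lf1R.
  rewrite /K -[(cq *: D) *+ _]scaler_nat scalerA mulrC /cq divfK // scaler_nat subrr //.
have bf1 : bihomog (p - 1) (q + 1) f1.
  apply/bihomE; split; first exact: (hom_op_other Linj LR hp).
  exact: (hom_op_same Rinj LR hq).
have SuE : Su H = h1.
  rewrite /Su udxE; apply: (pisE m0 bf1 h1harm (g1:=0) (g2:=K)).
  by rewrite /h1 mulr0 addr0 subrK.
set cp : C := 2 / (2 * m + 4 * (p - 1))%N%:R.
set K' := cp *: D.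
set f2 := op L Rs H.
have lf2L : lap L f2 = D *+ 2.
  by rewrite /f2 (lap_op_same Rs Linj) lL op0 addr0 dd_comm.
have lf2R : lap Rs f2 = 0 by rewrite /f2 (lap_op_other LR) lR op0.
have hK' : hom L (p - 1) K' by apply: homZ.
have hK'R : hom Rs (q - 1) K' by apply: homZ.
set h2 := f2 - nx * K'.
have h2harm : harmonic h2.
  apply/harmE; split; last first.
    by rewrite /h2 lapB (lap_nrm' LR) lapZ lDR scaler0 mulr0 subr0 lf2R.
  rewrite /h2 lapB (lap_nrm Linj hK') lapZ lDL scaler0 mulr0 addr0 lf2L.
  rewrite /K' -[(cp *: D) *+ _]scaler_nat scalerA mulrC /cp divfK // scaler_nat subrr //.
have bf2 : bihomog (p + 1) (q - 1) f2.
  apply/bihomE; split; first exact: (hom_op_same Linj RL hp).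
  exact: (hom_op_other Rinj RL hq).
have SxE : Sx H = h2.
  rewrite /Sx xduE; apply: (pisE m0 bf2 h2harm (g1:=K') (g2:=0)).
  by rewrite /h2 mulr0 addr0 subrK.
have hh1L : hom L (p - 1) h1.
  apply: homB; first exact: (hom_op_other Linj LR hp).
  rewrite -[(p - 1)%N]add0n; apply: homM; [exact: (hom_nrm' RL) | exact: hKL].
have hh1R : hom Rs (q + 1) h1.
  apply: homB; first exact: (hom_op_same Rinj LR hq).
  case: (posnP q) => [q0|qpos].
    by rewrite /K (Dq0 q0) scaler0 mulr0; apply: hom0.
  rewrite (_ : (q + 1 = 2 + (q - 1))%N); last by lia.
  apply: homM; [exact: (hom_nrm Rinj) | exact: hK].
have hh2R : hom Rs (q - 1) h2.
  apply: homB; first exact: (hom_op_other Rinj RL hq).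
  rewrite -[(q - 1)%N]add0n; apply: homM; [exact: (hom_nrm' LR) | exact: hK'R].
have hh2L : hom L (p + 1) h2.
  apply: homB; first exact: (hom_op_same Linj RL hp).
  case: (posnP p) => [p0|ppos].
    by rewrite /K' (Dp0 p0) scaler0 mulr0; apply: hom0.
  rewrite (_ : (p + 1 = 2 + (p - 1))%N); last by lia.
  apply: homM; [exact: (hom_nrm Linj) | exact: hK'].
set F1 := op L Rs h1.
set F2 := op Rs L h2.
set Z := xy Rs L * D.
have bF1 : bihomog (p - 1 + 1) (q + 1 - 1) F1.
  apply/bihomE; split; first exact: (hom_op_same Linj RL hh1L).
  exact: (hom_op_other Rinj RL hh1R).
have bF2 : bihomog (p + 1 - 1) (q - 1 + 1) F2.
  apply/bihomE; split; first exact: (hom_op_other Linj LR hh2L).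
  exact: (hom_op_same Rinj LR hh2R).
have bZ : bihomog (p - 1 + 1) (q - 1 + 1) Z.
  apply/bihomE; split; last exact: (hom_xy Rinj RL hDR).
  rewrite /Z xy_comm; exact: (hom_xy Linj LR hDL).
have [S1h S1c] := pis_cong m0 bF1.
have [S2h S2c] := pis_cong m0 bF2.
have [S3h S3c] := pis_cong m0 bZ.
have -> : Sx (Su H) = pis F1 by rewrite /Sx SuE xduE.
have -> : Su (Sx H) = pis F2 by rewrite /Su SxE udxE.
have -> : Cop (Aop H) = pis Z by rewrite /Cop AopE uxE.
set e := Hval R m p - Hval R m q.
set k := e / ((1 + Hval R m p) * (1 + Hval R m q)).
have eH : e *: H = H *+ q - H *+ p.
  have ee : e = q%:R - p%:R by rewrite /e /Hval; ring.
  by rewrite ee scalerBl !scaler_nat.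
have kZ : k *: Z = (cp *: Z) *+ 2 - (cq *: Z) *+ 2.
  case: (posnP p) => [p0|ppos].
    by rewrite /Z (Dp0 p0) mulr0 !scaler0 mul0rn subr0.
  case: (posnP q) => [q0|qpos].
    by rewrite /Z (Dq0 q0) mulr0 !scaler0 mul0rn subr0.
  rewrite [(cp *: Z) *+ 2]scalerMnl [(cq *: Z) *+ 2]scalerMnl -scalerBl; congr (_ *: _).
  have [p' ep] : exists p', p = p'.+1 by exists p.-1; rewrite prednK.
  have [q' eq] : exists q', q = q'.+1 by exists q.-1; rewrite prednK.
  rewrite /k /e /cp /cq ep eq /Hval !subSS !subn0 -[p'.+1%:R]natr1 -[q'.+1%:R]natr1.
  apply: scal_id'.
  - by rewrite pnatr_eq0.
  - by rewrite -!natrD pnatr_eq0 -lt0n !addn_gt0 m0.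
  - by rewrite -!natrD pnatr_eq0 -lt0n !addn_gt0 m0.
  - by rewrite !natrD; ring.
  - by rewrite !natrD; ring.
have opc : op L Rs f1 = op Rs L f2 + H *+ p - H *+ q.
  have := op_comm Linj Rinj H; rewrite -/f1 -/f2.
  have -> : op L L H = H *+ p := euler hp.
  have -> : op Rs Rs H = H *+ q := euler hq.
  move=> e0.
  have -> : op L Rs f1 = (op L Rs f1 - op Rs L f2) + op Rs L f2 by rewrite subrK.
  by rewrite e0; ring.
have eF1 : F1 = op L Rs f1 - (nu * op L Rs K + (xy L Rs * K) *+ 2).
  by rewrite /F1 /h1 opB (op_nrm L Rinj).
have eF2 : F2 = op Rs L f2 - (nx * op Rs L K' + (xy Rs L * K') *+ 2).
  by rewrite /F2 /h2 opB (op_nrm Rs Linj).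
have xK : xy L Rs * K = (cq *: Z) by rewrite -xy_comm /K /Z scalerAr.
have xK' : xy Rs L * K' = (cp *: Z) by rewrite /K' /Z scalerAr.
apply/eqP; rewrite -subr_eq0; apply/eqP.
set T := _ - _.
have Th : harmonic T.
  apply: harmB; first exact: harmB.
  by apply: harmB; apply: harmZ.
have Tc : cong T (F1 - F2 - (k *: Z - e *: H)).
  apply: congB; first by apply: congB; apply: cong_sym.
  by apply: congB; apply: congZ; [apply: cong_sym | apply: cong_refl].
have [X [Y eT]] : cong T 0.
  apply: (cong_trans Tc).
  exists (op Rs L K'), (- op L Rs K).
  rewrite eF1 eF2 xK xK' kZ eH opc; ring.
have [Th1 Th2] := Th.
have := harm_uniq Th1 Th2 (g1:=X) (g2:=Y).
by rewrite add0r in eT; apply.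
Qed.
End Work6.

End W6.
Import W6.

Theorem lemma3p4 (R : rcfType) (m : nat) (hm : (4 < m)%N)
  (p q : nat) (H : {mpoly R[i][m + m]}) :
  bihomog p q H -> harmonic H ->
  Sx (Su H) - Su (Sx H) =
    ((@Hval R m p - @Hval R m q) / ((1 + @Hval R m p) * (1 + @Hval R m q)))
      *: Cop (Aop H)
    - (@Hval R m p - @Hval R m q) *: H.
Proof.
move=> hb hh; have m0 : (0 < m)%N by lia.
exact: (W6.main m0 hb hh).
Qed.
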